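(* Let $G$ be a non-abelian finite simple group, $V$ a non-trivial irreducible $\mathbb{R}G$-module of odd dimension affording $\rho\colon G\to\mathrm{GL}(V)$, and $n\in\mathrm{GL}(V)$ of finite order normalizing $\rho(G)$; let $\nu\in\mathrm{Aut}(G)$ be defined by $\nu(x)=\rho^{-1}(n\rho(x)n^{-1})$. Suppose there is $g\in G$ such that $\alpha:=\mathrm{ad}_g\circ\nu$ has even order and $$\dim(V)>(|\alpha|-1)\,|C_G(\alpha_{(p)})|^{1/2}$$ for all primes $p$ dividing $|\alpha|$. Then there is $h\in G$ such that $\rho(h)n$ has eigenvalue $1$.
   Context: $\mathrm{ad}_g$ is the inner automorphism $x\mapsto gxg^{-1}$. For a prime $p$ dividing the order of $\alpha\in\mathrm{Aut}(G)$, $\alpha_{(p)}$ denotes an element of order $p$ in the cyclic group $\langle\alpha\rangle$, and $C_G(\alpha_{(p)})=\{x\in G\mid \alpha_{(p)}(x)=x\}$. *)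

(* Defs.v *)
From HB Require Import structures.
From mathcomp Require Import all_boot all_order all_algebra all_fingroup all_solvable.
From mathcomp Require Import mxrepresentation.
From mathcomp Require Import reals.
Set Implicit Arguments. Unset Strict Implicit. Unset Printing Implicit Defensive.
Import Order.TTheory GRing.Theory Num.Theory.

Local Open Scope group_scope.

(* ad_g : x |-> g x g^-1.  In MathComp  y ^ z = z^-1 y z, so ad_g = conj_aut G g^-1. *)
Definition ad_aut (gT : finGroupType) (G : {group gT}) (g : gT) : {perm gT} :=
  conj_aut G g^-1.

(* alpha = ad_g \o nu ; MathComp permutation product: (s * t) x = t (s x). *)
Definition alpha_of (gT : finGroupType) (G : {group gT}) (g : gT) (nu : {perm gT})
  : {perm gT} := nu * ad_aut G g.

(* alpha_(p): an element of order p in <[alpha]>, for p prime dividing #[alpha]. *)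
Definition alpha_p (gT : finGroupType) (a : {perm gT}) (p : nat) : {perm gT} :=
  a ^+ (#[a] %/ p).

Definition fixed_in (gT : finGroupType) (G : {group gT}) (b : {perm gT}) : {set gT} :=
  [set x in G | b x == x].

(* Main.v *)
Require Import Defs.
From HB Require Import structures.
From mathcomp Require Import all_boot all_order all_algebra all_fingroup all_solvable.
From mathcomp Require Import mxrepresentation.
From mathcomp Require Import reals.
From mathcomp Require Import polyrcf.
From mathcomp Require Import lra.
Import Order.TTheory GRing.Theory Num.Theory.
Local Open Scope ring_scope.

Module Helpers.
Set Implicit Arguments. Unset Strict Implicit. Unset Printing Implicit Defensive.

Lemma sum_transl (V : nmodType) (gT : finGroupType) (G : {group gT}) (y : gT) (F : gT -> V) :
  y \in G -> \sum_(x in G) F x = \sum_(x in G) F (y * x)%g.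
Proof.
move=> Gy; rewrite (reindex_inj (mulgI y)) /=; apply: eq_bigl => x.
by rewrite groupMl.
Qed.
Lemma odd_real_eig (R : rcfType) d (C : 'M[R]_d) : odd d -> exists a, eigenvalue C a.
Proof.
move=> od; have : ~~ odd (size (char_poly C)) by rewrite size_char_poly /= negbK.
by case/odd_poly_root => a ha; exists a; rewrite eigenvalue_root_char.
Qed.

Lemma eig_not_unit (F : fieldType) d (C : 'M[F]_d) a :
  eigenvalue C a -> (C - a%:M) \notin unitmx.
Proof.
case/eigenvalueP => v hv nz; apply/negP => u; case/negP: nz.
have h0 : v *m (C - a%:M) = 0 by rewrite mulmxBr hv mul_mx_scalar subrr.
by rewrite -(mulmx1 v) -(mulmxV u) mulmxA h0 mul0mx.
Qed.

Lemma schur_scalar (R : rcfType) (gT : finGroupType) (G : {group gT}) d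
  (rG : mx_representation R G d) (C : 'M[R]_d) :
  odd d -> mx_irreducible rG -> (forall x, x \in G -> C *m rG x = rG x *m C) ->
  exists c, C = c%:M.
Proof.
move=> od irr cC; have [a ea] := odd_real_eig C od.
exists a; apply/eqP; rewrite -subr_eq0; apply/negP => /negP nz.
have cen : centgmx rG (C - a%:M).
  by apply/centgmxP => x Gx; rewrite mulmxBl mulmxBr cC // scalar_mxC.
by have := mx_Schur irr cen nz; rewrite (negbTE (eig_not_unit ea)).
Qed.
Lemma mul_mx_delta_tr (R : comPzRingType) d (A : 'M[R]_d) (i j : 'I_d) :
  \tr (A *m delta_mx j i) = A i j.
Proof.
rewrite /mxtrace (bigD1 i) //= big1 => [|k nk]; rewrite mxE.
  rewrite (bigD1 j) //= big1 => [|l nl]; first by rewrite !mxE !eqxx mulr1 !addr0.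
  by rewrite !mxE (negbTE nl) mulr0.
by apply: big1 => l _; rewrite !mxE (negbTE nk) andbF mulr0.
Qed.

Lemma delta_mul_mx_tr (R : comPzRingType) d (B : 'M[R]_d) (i j : 'I_d) :
  \tr (delta_mx i j *m B) = B j i.
Proof. by rewrite mxtrace_mulC mul_mx_delta_tr. Qed.

Lemma delta_sandwich (R : comPzRingType) d (X : 'M[R]_d) (i j k : 'I_d) :
  delta_mx j i *m X *m delta_mx i k = X i i *: delta_mx j k.
Proof.
apply/matrixP => a b; rewrite !mxE.
rewrite (bigD1 i) //= big1 => [|l nl]; last by rewrite !mxE (negbTE nl) mulr0.
rewrite !mxE eqxx /= addr0 (bigD1 i) //= big1 => [|l nl]; last by rewrite !mxE (negbTE nl) andbF mul0r.
rewrite !mxE eqxx andbT addr0.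
by case: (a == j); case: (b == k); rewrite /= ?mulr1 ?mul1r ?mulr0 ?mul0r.
Qed.

Lemma tr_tr (R : comPzRingType) d (X Y : 'M[R]_d) :
  \tr X * \tr Y = \sum_i \sum_j \tr (X *m delta_mx i j *m Y *m delta_mx j i).
Proof.
rewrite /mxtrace big_distrl /=; apply: eq_bigr => i _.
rewrite big_distrr /=; apply: eq_bigr => j _.
rewrite -/(mxtrace (X *m delta_mx i j *m Y *m delta_mx j i)) (mxtrace_mulC (X *m _ *m Y)) !mulmxA delta_sandwich -scalemxAl mxtraceZ.
by rewrite delta_mul_mx_tr.
Qed.

Definition Wavg (R : comUnitRingType) (gT : finGroupType) (G : {group gT}) d
  (rG : mx_representation R G d) (Z : 'M[R]_d) :=
  \sum_(x in G) rG x *m Z *m rG (x^-1)%g.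

Lemma Wavg_comm (R : comUnitRingType) (gT : finGroupType) (G : {group gT}) d
  (rG : mx_representation R G d) Z y :
  y \in G -> Wavg rG Z *m rG y = rG y *m Wavg rG Z.
Proof.
move=> Gy; rewrite /Wavg mulmx_suml mulmx_sumr (sum_transl _ Gy).
apply: eq_bigr => x Gx.
rewrite !mulmxA -repr_mxM // -!mulmxA -repr_mxM ?groupV ?groupM //.
by rewrite invMg -mulgA mulVg mulg1.
Qed.

Lemma Wavg_tr (R : comUnitRingType) (gT : finGroupType) (G : {group gT}) d
  (rG : mx_representation R G d) Z :
  \tr (Wavg rG Z) = #|G|%:R * \tr Z.
Proof.
rewrite /Wavg raddf_sum /= (eq_bigr (fun _ => \tr Z)) => [|x Gx].
  by rewrite sumr_const mulr_natl.
by rewrite mxtrace_mulC mulmxA -repr_mxM ?groupV // mulVg repr_mx1 mul1mx.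
Qed.

Lemma Wavg_scalar (R : rcfType) (gT : finGroupType) (G : {group gT}) d
  (rG : mx_representation R G d) Z :
  odd d -> mx_irreducible rG ->
  d%:R *: Wavg rG Z = (#|G|%:R * \tr Z)%:M.
Proof.
move=> od irr; have [c hc] := schur_scalar od irr (fun y Gy => @Wavg_comm _ _ _ _ rG Z y Gy).
have := Wavg_tr rG Z; rewrite hc mxtrace_scalar => <-.
by rewrite scale_scalar_mx mulr_natl.
Qed.

Lemma key_identity (R : rcfType) (gT : finGroupType) (G : {group gT}) d
  (rG : mx_representation R G d) (A B : 'M[R]_d) :
  odd d -> mx_irreducible rG ->
  d%:R * \sum_(x in G) \tr (A *m rG x) * \tr (B *m rG (x^-1)%g)
   = #|G|%:R * \tr (A *m B).
Proof.
move=> od irr.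
have e1 : \sum_(x in G) \tr (A *m rG x) * \tr (B *m rG (x^-1)%g) =
   \sum_i \sum_j \tr (A *m Wavg rG (delta_mx i j *m B) *m delta_mx j i).
  rewrite (eq_bigr _ (fun x _ => tr_tr _ _)) exchange_big /=; apply: eq_bigr => i _.
  rewrite exchange_big /=; apply: eq_bigr => j _.
  rewrite /Wavg mulmx_sumr mulmx_suml raddf_sum /=; apply: eq_bigr => x _.
  by rewrite !mulmxA.
rewrite e1 mulr_sumr.
transitivity (\sum_i \sum_j #|G|%:R * (A i j * B j i)).
  apply: eq_bigr => i _; rewrite mulr_sumr; apply: eq_bigr => j _.
  rewrite -mxtraceZ scalemxAl scalemxAr Wavg_scalar // mul_mx_scalar -scalemxAl mxtraceZ.
  by rewrite delta_mul_mx_tr mul_mx_delta_tr -mulrA (mulrC (B j i)).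
rewrite /mxtrace mulr_sumr; apply: eq_bigr => i _.
by rewrite mxE mulr_sumr.
Qed.

Lemma sum_shift (V : zmodType) N (H : nat -> V) :
  H N = H 0%N -> \sum_(i < N) H i.+1 = \sum_(i < N) H i.
Proof.
move=> hN; have e1 := @big_nat_recr V 0 +%R N 0 H (leq0n N).
have e2 := @big_nat_recl V 0 +%R N 0 H (leq0n N).
have e3 : \sum_(i < N) H i.+1 = \sum_(0 <= i < N) H i.+1 by rewrite big_mkord.
rewrite e3 -(big_mkord xpredT); apply: (@addIr _ (H N)).
by rewrite -e1 e2 hN addrC.
Qed.

Lemma Aut_mem (gT : finGroupType) (G : {group gT}) (a : {perm gT}) x :
  a \in Aut G -> (a x \in G) = (x \in G).
Proof.
move=> aA; case Gx: (x \in G); first by rewrite Aut_closed.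
by rewrite (out_Aut aA) ?Gx.
Qed.

Lemma sum_aut (V : nmodType) (gT : finGroupType) (G : {group gT}) (a : {perm gT}) (F : gT -> V) :
  a \in Aut G -> \sum_(x in G) F (a x) = \sum_(x in G) F x.
Proof.
move=> aA; rewrite [RHS](reindex_inj (@perm_inj _ a)) /=; apply: eq_bigl => x.
by rewrite Aut_mem.
Qed.

Definition qf (R : pzRingType) d (w : 'rV[R]_d) := (w *m w^T) 0 0.

Lemma qf_ge0 (R : realDomainType) d (w : 'rV[R]_d) : 0 <= qf w.
Proof. by rewrite /qf mxE; apply: sumr_ge0 => k _; rewrite mxE -expr2 sqr_ge0. Qed.

Lemma qf_eq0 (R : realDomainType) d (w : 'rV[R]_d) : qf w = 0 -> w = 0.
Proof.
rewrite /qf mxE => /psumr_eq0P h.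
have {}h : forall k, w 0 k * w 0 k = 0.
  move=> k; have := h _ k isT; rewrite mxE; apply.
  by move=> j _; rewrite mxE -expr2 sqr_ge0.
apply/matrixP => i k; rewrite ord1 mxE.
by have /eqP := h k; rewrite mulf_eq0 orbb => /eqP.
Qed.

Lemma inv_form (R : rcfType) (gT : finGroupType) (G : {group gT}) d
  (rG : mx_representation R G d) (m : 'M[R]_d) (N : nat) (a : {perm gT}) :
  (0 < N)%N -> m ^+ N = 1 -> a \in Aut G ->
  (forall x, x \in G -> m *m rG x = rG (a x) *m m) ->
  exists2 S : 'M[R]_d, S \in unitmx &
    forall x j, x \in G -> (rG x *m m ^+ j) *m S *m (rG x *m m ^+ j)^T = S.
Proof.
move=> N0 mN aA mrG.
pose T x (i : nat) := rG x *m m ^+ i.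
pose S := \sum_(i < N) \sum_(x in G) T x i *m (T x i)^T.
have invy : forall y, y \in G -> rG y *m S *m (rG y)^T = S.
  move=> y Gy; rewrite mulmx_sumr mulmx_suml; apply: eq_bigr => i _.
  rewrite mulmx_sumr mulmx_suml [RHS](sum_transl _ Gy); apply: eq_bigr => x Gx.
  by rewrite /T repr_mxM // !trmx_mul !mulmxA.
have invm : m *m S *m m^T = S.
  rewrite mulmx_sumr mulmx_suml.
  rewrite /S -(@sum_shift _ N (fun i => \sum_(x in G) T x i *m (T x i)^T)); last first.
    by rewrite /T mN expr0.
  apply: eq_bigr => i _.
  rewrite mulmx_sumr mulmx_suml -[RHS](sum_aut _ aA); apply: eq_bigr => x Gx.
  have e : m *m T x i = T (a x) i.+1.
    by rewrite /T mulmxA mrG // -mulmxA exprS mulmxE.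
  by rewrite -e !trmx_mul !mulmxA.
have invmj : forall j, m ^+ j *m S *m (m ^+ j)^T = S.
  elim=> [|j IH]; first by rewrite expr0 mul1mx trmx1 mulmx1.
  by rewrite exprS -mulmxE trmx_mul !mulmxA -2!(mulmxA m) IH.
exists S; last first.
  move=> x j Gx; rewrite trmx_mul !mulmxA -2!(mulmxA (rG x)) invmj.
  exact: invy.
rewrite -row_free_unit -kermx_eq0; apply/negP => /negP nz.
have [k nzk] : exists k, row k (kermx S) != 0.
  case: (pickP (fun k => row k (kermx S) != 0)) => [k hk|h0]; first by exists k.
  case/negP: nz; apply/eqP/row_matrixP => k; rewrite row0; exact/eqP/negbFE/h0.
set v := row k (kermx S) in nzk.
have vS : v *m S = 0 by apply/sub_kermxP; rewrite row_sub.
have q0 : \sum_(i < N) \sum_(x in G) qf (v *m T x i) = 0.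
  have h : (v *m S *m v^T) 0 0 = 0 by rewrite vS mul0mx mxE.
  transitivity ((v *m S *m v^T) 0 0); last exact: h.
  rewrite mulmx_sumr mulmx_suml summxE; apply: eq_bigr => i _.
  rewrite mulmx_sumr mulmx_suml summxE; apply: eq_bigr => x _.
  by rewrite /qf trmx_mul !mulmxA.
have := @psumr_eq0P _ _ _ _ (fun i _ => sumr_ge0 _ (fun x _ => qf_ge0 _)) q0 (Ordinal N0) isT.
move/psumr_eq0P => /(_ (fun x _ => qf_ge0 _) 1%g (group1 G)).
rewrite /T repr_mx1 expr0 mulmx1 mulmx1 => /qf_eq0 v0.
by rewrite v0 eqxx in nzk.
Qed.

Lemma tr_inv_form (R : fieldType) d (S X : 'M[R]_d) :
  S \in unitmx -> X *m S *m X^T = S -> X \in unitmx /\ \tr (invmx X) = \tr X.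
Proof.
move=> Su h.
have h1 : X *m (S *m X^T *m invmx S) = 1%:M by rewrite !mulmxA h mulmxV.
have [Xu _] := mulmx1_unit h1.
split=> //.
have -> : invmx X = S *m X^T *m invmx S.
  transitivity (invmx X *m (X *m (S *m X^T *m invmx S))); first by rewrite h1 mulmx1.
  by rewrite -!mulmxA (mulmxA (invmx X)) mulVmx // mul1mx.
by rewrite mxtrace_mulC mulmxA mulVmx // mul1mx mxtrace_tr.
Qed.

Lemma invmx_mul (R : fieldType) d (A B : 'M[R]_d) :
  A \in unitmx -> B \in unitmx -> invmx (A *m B) = invmx B *m invmx A.
Proof.
move=> Au Bu.
have h1 : (A *m B) *m (invmx B *m invmx A) = 1%:M.
  by rewrite -mulmxA (mulmxA B) mulmxV // mul1mx mulmxV.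
transitivity (invmx (A *m B) *m ((A *m B) *m (invmx B *m invmx A))); first by rewrite h1 mulmx1.
by rewrite mulmxA mulVmx ?unitmx_mul ?Au // mul1mx.
Qed.

Lemma Aut_V (gT : finGroupType) (G : {group gT}) (b : {perm gT}) x :
  b \in Aut G -> x \in G -> b (x^-1)%g = (b x)^-1%g.
Proof. by move=> bA Gx; rewrite -(autmE bA) (morphV (autm_morphism bA)). Qed.

Lemma Aut_M (gT : finGroupType) (G : {group gT}) (b : {perm gT}) x y :
  b \in Aut G -> x \in G -> y \in G -> b (x * y)%g = (b x * b y)%g.
Proof. by move=> bA Gx Gy; rewrite -(autmE bA) (morphM (autm_morphism bA)). Qed.

Lemma twisted_card (gT : finGroupType) (G : {group gT}) (b : {perm gT}) x :
  b \in Aut G ->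
  (#|[set y in G | (y * (b y)^-1)%g == x]| <= #|[set z in G | b z == z]|)%N.
Proof.
move=> bA; set Sx := [set y in G | _].
case: (pickP (mem Sx)) => [y0 Sy0|h0]; last first.
  by rewrite (eq_card0 h0).
rewrite -(card_imset _ (mulgI (y0^-1)%g)); apply: subset_leq_card.
apply/subsetP => _ /imsetP[y Sy ->]; move: Sy0 Sy; rewrite !inE.
case/andP => Gy0 /eqP e0; case/andP => Gy /eqP e.
rewrite groupM ?groupV //= (Aut_M bA) ?groupV // (Aut_V bA) //.
rewrite -e0 in e; apply/eqP.
have : (y0^-1 * (y * (b y)^-1) * b y = y0^-1 * (y0 * (b y0)^-1) * b y)%g by rewrite e.
by rewrite -!mulgA mulVg mulg1 !mulgA mulVg mul1g => ->.
Qed.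

Lemma trace_bound (R : rcfType) (gT : finGroupType) (G : {group gT}) d
  (rG : mx_representation R G d) (M : 'M[R]_d) (b : {perm gT}) :
  odd d -> mx_irreducible rG -> M \in unitmx -> b \in Aut G ->
  (forall x, x \in G -> M *m rG x = rG (b x) *m M) ->
  (forall x, x \in G -> \tr (invmx (rG x *m M)) = \tr (rG x *m M)) ->
  \tr M ^+ 2 <= #|[set z in G | b z == z]|%:R.
Proof.
move=> od irr Mu bA hM hinv.
pose f x := \tr (rG x *m M) ^+ 2.
have f0 : forall x, 0 <= f x by move=> x; apply: sqr_ge0.
have d0 : (d%:R : R) != 0 by rewrite pnatr_eq0; case: (d) od.
have sumf : \sum_(x in G) f x = #|G|%:R.
  have := key_identity M (invmx M) od irr.
  rewrite mulmxV // mxtrace1 (eq_bigr (fun x => f x)) => [|x Gx].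
    by rewrite [LHS]mulrC => /(mulIf d0).
  by rewrite repr_mxV // -invmx_mul ?repr_mx_unit // hinv // (mxtrace_mulC M) /f expr2.
have twist : forall y, y \in G -> f (y * (b y)^-1)%g = \tr M ^+ 2.
  move=> y Gy; have Gby : b y \in G by rewrite Aut_closed.
  have e : invmx (rG (b y)) *m M = M *m invmx (rG y).
    rewrite -{1}(mulmxK (repr_mx_unit rG Gy) M) hM // -!mulmxA mulKmx ?repr_mx_unit //.
  rewrite /f repr_mxM ?groupV // repr_mxV // -mulmxA e mxtrace_mulC -mulmxA.
  by rewrite mulVmx ?repr_mx_unit // mulmx1.
set C := [set z in G | b z == z].
have ineq : #|G|%:R * \tr M ^+ 2 <= #|C|%:R * #|G|%:R.
  rewrite [X in X <= _]mulr_natl -sumr_const -(eq_bigr _ twist) -sumf mulr_sumr.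
  rewrite (partition_big (fun y => (y * (b y)^-1)%g) (mem G)) /=; last first.
    by move=> y Gy; rewrite groupM ?groupV ?Aut_closed.
  apply: ler_sum => x Gx.
  rewrite (eq_bigr (fun _ => f x)) => [|y /andP[_ /eqP ->] //].
  rewrite sumr_const -[X in X <= _]mulr_natl; apply: ler_wpM2r => //; rewrite ler_nat.
  apply: leq_trans (twisted_card x bA); rewrite cardsE; apply: subset_leq_card.
  by apply/subsetP => y.
by rewrite mulrC ler_pM2r // ltr0n cardG_gt0 in ineq.
Qed.

Lemma conj_rel (R : rcfType) (gT : finGroupType) (G : {group gT}) d
  (rG : mx_representation R G d) (m : 'M[R]_d) (a : {perm gT}) :
  a \in Aut G -> (forall x, x \in G -> m *m rG x = rG (a x) *m m) ->
  forall j x, x \in G -> m ^+ j *m rG x = rG ((a ^+ j)%g x) *m m ^+ j.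
Proof.
move=> aA h; elim=> [|j IH] x Gx; first by rewrite expr0 expg0 perm1 mul1mx mulmx1.
rewrite exprS -mulmxE -mulmxA IH // mulmxA h ?Aut_closed ?groupX //.
by rewrite expgSr permM mulmxA.
Qed.

Lemma unit_pow (R : fieldType) d (m : 'M[R]_d) j : m \in unitmx -> m ^+ j \in unitmx.
Proof.
move=> u; elim: j => [|j IH]; first by rewrite expr0 unitmx1.
by rewrite exprS -mulmxE unitmx_mul u IH.
Qed.

Lemma eig_pow (R : fieldType) d (m : 'M[R]_d) (v : 'rV_d) mu :
  v *m m = mu *: v -> forall j, v *m m ^+ j = mu ^+ j *: v.
Proof.
move=> h; elim=> [|j IH]; first by rewrite expr0 mulmx1 expr0 scale1r.
by rewrite exprSr -mulmxE mulmxA IH -scalemxAl h scalerA exprSr.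
Qed.

Lemma perm_fixX (T : finType) (s : {perm T}) x u : s x = x -> (s ^+ u)%g x = x.
Proof.
move=> h; elim: u => [|u IH]; first by rewrite expg0 perm1.
by rewrite expgSr permM IH.
Qed.

Lemma fixed_sub (gT : finGroupType) (G : {group gT}) (a : {perm gT}) j :
  (0 < j)%N -> (j < #[a]%g)%N ->
  exists2 p, prime p /\ (p %| #[a]%g)%N &
    [set z in G | (a ^+ j)%g z == z] \subset fixed_in G (alpha_p a p).
Proof.
move=> j0 jk.
set o := #[a ^+ j]%g.
have o1 : (1 < o)%N.
  rewrite /o orderXgcd ltn_divRL ?gcdn_gt0 ?(leq_trans j0 (ltnW jk)) ?orbT ?dvdn_gcdl //.
  by rewrite mul1n (leq_ltn_trans _ jk) // dvdn_leq // dvdn_gcdr.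
set p := pdiv o.
have pp : prime p by exact: pdiv_prime o1.
have po : (p %| o)%N by apply: pdiv_dvd.
have pk : (p %| #[a]%g)%N by apply: dvdn_trans po (orderXdvd _ _).
exists p => //.
have sub : (<[a ^+ (#[a]%g %/ p)]>)%G \in [set H : {group {perm gT}} | (H \subset <[a]>)%g & #|H| == p].
  by rewrite (cycle_sub_group pk) set11.
have sub2 : (<[(a ^+ j) ^+ (o %/ p)]>)%G \in [set H : {group {perm gT}} | (H \subset <[a]>)%g & #|H| == p].
  rewrite inE /= cycle_subG groupX ?cycle_id ?mem_cycle //= -orderE orderXdiv ?dvdn_div //.
  by rewrite -/o divnA // mulKn // ltnW.
have e := cycle_sub_group pk.
have : (<[(a ^+ j) ^+ (o %/ p)]>)%G = (<[a ^+ (#[a]%g %/ p)]>)%G.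
  by apply/set1P; rewrite -e.
move/(congr1 val) => /= ec.
have : (a ^+ (#[a]%g %/ p) \in <[a ^+ j]>)%g.
  have sj : (<[(a ^+ j) ^+ (o %/ p)]> \subset <[a ^+ j]>)%g by rewrite cycle_subG groupX // cycle_id.
  by apply: (subsetP sj); rewrite ec cycle_id.
case/cycleP => u eu.
apply/subsetP => z; rewrite !inE => /andP[-> /eqP fz] /=.
by rewrite /alpha_p eu perm_fixX.
Qed.

Lemma repr_pow (R : comUnitRingType) (gT : finGroupType) (G : {group gT}) d
  (rG : mx_representation R G d) y u : y \in G -> rG y ^+ u = rG (y ^+ u)%g.
Proof.
move=> Gy; elim: u => [|u IH]; first by rewrite expr0 expg0 repr_mx1.
by rewrite exprS expgS repr_mxM ?groupX // IH.
Qed.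

Lemma fin_order (R : rcfType) (gT : finGroupType) (G : {group gT}) d
  (rG : mx_representation R G d) (n : 'M[R]_d) (nu : {perm gT}) (g : gT) :
  n \in unitmx -> (exists2 k : nat, (0 < k)%N & n ^+ k = 1%:M) ->
  nu \in Aut G -> (forall x, x \in G -> rG (nu x) = n *m rG x *m invmx n) ->
  g \in G -> exists2 N : nat, (0 < N)%N & (rG g *m n) ^+ N = 1.
Proof.
move=> nu_ [K K0 nK] nuA hnu Gg.
have hn : forall x, x \in G -> n *m rG x = rG (nu x) *m n.
  by move=> x Gx; rewrite hnu // mulmxKV.
have hnj : forall j x, x \in G -> exists2 z, z \in G & n ^+ j *m rG x = rG z *m n ^+ j.
  elim=> [|j IH] x Gx; first by exists x => //; rewrite expr0 mul1mx mulmx1.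
  have [z Gz ez] := IH (nu x) (Aut_closed nuA Gx).
  exists z => //; by rewrite exprSr -mulmxE -mulmxA hn // mulmxA ez -mulmxA.
have hm : forall j, exists2 y, y \in G & (rG g *m n) ^+ j = rG y *m n ^+ j.
  elim=> [|j IH]; first by exists 1%g => //; rewrite !expr0 repr_mx1 mul1mx.
  have [y Gy ey] := IH; have [z Gz ez] := hnj j g Gg.
  exists (y * z)%g; first by rewrite groupM.
  rewrite exprSr -mulmxE ey mulmxA -(mulmxA (rG y)) ez repr_mxM // !mulmxA.
  by rewrite -mulmxA exprSr -mulmxE.
have [y Gy ey] := hm K.
exists (K * #[y]%g)%N; first by rewrite muln_gt0 K0 order_gt0.
by rewrite exprM ey nK mulmx1 repr_pow // expg_order repr_mx1.
Qed.


End Helpers.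
Import Helpers.

Theorem lemma4p3p3 (R : realType) (gT : finGroupType) (G : {group gT})
  (d : nat) (rG : mx_representation R G d)
  (n : 'M[R]_d) (nu : {perm gT}) (g : gT) :
  simple G -> ~~ abelian G ->
  mx_irreducible rG ->
  (exists2 x, x \in G & rG x != 1%:M) ->
  odd d ->
  n \in unitmx ->
  (exists2 k : nat, (0 < k)%N & n ^+ k = 1%:M) ->
  (forall x, x \in G -> exists2 y, y \in G & n *m rG x *m invmx n = rG y) ->
  nu \in Aut G ->
  (forall x, x \in G -> rG (nu x) = n *m rG x *m invmx n) ->
  g \in G ->
  ~~ odd #[alpha_of G g nu]%g ->
  (forall p : nat, prime p -> (p %| #[alpha_of G g nu]%g)%N ->
     (#[alpha_of G g nu]%g.-1)%:R
       * Num.sqrt (#|fixed_in G (alpha_p (alpha_of G g nu) p)|%:R) < d%:R :> R) ->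
  exists2 h, h \in G & eigenvalue (rG h *m n) 1.
Proof.
move=> _ _ irr _ od nu_ nfin _ nuA hnu Gg keven hbound.
set a := alpha_of G g nu in keven hbound.
set k := #[a]%g in keven hbound.
set m := rG g *m n.
have aA : a \in Aut G.
  by rewrite /a /alpha_of groupM // /ad_aut /conj_aut; apply: Aut_aut.
have ha : forall x, x \in G -> m *m rG x = rG (a x) *m m.
  move=> x Gx; rewrite /a /alpha_of permM /ad_aut conj_autE ?groupV ?Aut_closed //.
  rewrite conjgE invgK repr_mxM ?groupM ?groupV ?Aut_closed // repr_mxM ?groupV ?Aut_closed // hnu // /m.
  by rewrite repr_mxV // !mulmxA mulmxKV ?repr_mx_unit // mulmxKV.
have [N N0 mN] := fin_order nu_ nfin nuA hnu Gg.
have mu : m \in unitmx by rewrite unitmx_mul repr_mx_unit.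
have hj := conj_rel aA ha.
have k0 : (0 < k)%N := order_gt0 a.
have mk : m ^+ k = 1%:M.
  have [c ec] : exists c, m ^+ k = c%:M.
    by apply: (schur_scalar od irr) => x Gx; rewrite hj // expg_order perm1.
  have [mu0 emu] := odd_real_eig m od; case/eigenvalueP: emu => v hv nzv.
  have cmu : c = mu0 ^+ k.
    have := eig_pow hv k; rewrite ec mul_mx_scalar => /eqP.
    by rewrite -subr_eq0 -scalerBl scaler_eq0 (negbTE nzv) orbF subr_eq0 => /eqP.
  have c0 : 0 <= c by rewrite cmu exprn_even_ge0.
  have cN : c ^+ N = 1.
    have e : m ^+ (k * N) = 1%:M by rewrite mulnC exprM mN expr1n.
    have := eig_pow hv (k * N); rewrite e mulmx1 exprM -cmu => /eqP.
    rewrite -subr_eq0 -{1}(scale1r v) -scalerBl scaler_eq0 (negbTE nzv) orbF.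
    by rewrite subr_eq0 eq_sym => /eqP.
  by rewrite ec; move/eqP: cN; rewrite pexpr_eq1 // => /eqP ->.
have [S Su hS] := inv_form N0 mN aA ha.
pose t j := \tr (m ^+ j).
have tb : forall j, (0 < j)%N -> (j < k)%N -> (k.-1)%:R * `|t j| < d%:R.
  move=> j j0 jk.
  have [p [pp pk] sub] := fixed_sub G j0 jk.
  have tj : t j ^+ 2 <= #|[set z in G | (a ^+ j)%g z == z]|%:R.
    apply: (trace_bound od irr (unit_pow j mu) (groupX j aA) (hj j)).
    by move=> x Gx; have [_ ->] := tr_inv_form Su (hS x j Gx).
  apply: le_lt_trans (hbound p pp pk); apply: ler_wpM2l => //.
  rewrite -sqrtr_sqr ler_sqrt // (le_trans tj) // ler_nat.
  exact: subset_leq_card.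
have [k' ek] : exists k', k = k'.+2.
  exists k.-2; move: k0 keven; rewrite /k; case: #[a]%g => [|[|k2]] //.
pose P := \sum_(j < k) m ^+ j.
have trP : 0 < \tr P.
  rewrite /P raddf_sum /= ek big_ord_recl /= expr0 mxtrace1.
  have hs : \sum_(j < k'.+1) `|t j.+1| < d%:R.
    have kp : (0 : R) < k'.+1%:R by rewrite ltr0n.
    rewrite -(ltr_pM2l kp) mulr_sumr.
    have -> : k'.+1%:R * d%:R = \sum_(j < k'.+1) (d%:R : R).
      by rewrite sumr_const card_ord mulr_natl.
    apply: ltr_sum; first by apply/hasP; exists ord0 => //; rewrite mem_index_enum.
    move=> j _; have := tb j.+1 isT; rewrite ek ltnS ltn_ord => /(_ isT).
    by rewrite /=.
  have hl : - (\sum_(j < k'.+1) `|t j.+1|) <= \sum_(j < k'.+1) t j.+1.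
    by rewrite -sumrN; apply: ler_sum => j _; rewrite lerNl -normrN ler_norm.
  rewrite /t in hs hl; lra.
have P0 : P != 0 by apply: contraTneq trP => ->; rewrite mxtrace0 ltxx.
have Pm : P *m m = P.
  rewrite /P mulmx_suml.
  transitivity (\sum_(j < k) m ^+ j.+1).
    by apply: eq_bigr => j _; rewrite exprSr mulmxE.
  by apply: (@sum_shift _ k (fun j => m ^+ j)); rewrite mk expr0.
have [i nzi] : exists i, row i P != 0.
  case: (pickP (fun i => row i P != 0)) => [i hi|h0]; first by exists i.
  case/negP: P0; apply/eqP/row_matrixP => i; rewrite row0; exact/eqP/negbFE/h0.
exists g => //; apply/eigenvalueP; exists (row i P) => //.
by rewrite scale1r -row_mul Pm.
Qed.
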